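(* Let $\overline X$ be a triangle-free, square-free simplicial graph no connected component of which is a single vertex, and let $X$ be the blowup of $\overline X$ with respect to non-empty graphs $\{L_v\}$. Let $\Sigma,\Delta$ be non-maximal simplices of $X$. Then there exist (possibly empty or maximal) simplices $\Pi,\Psi$ of $X$ with $\Sigma\subseteq\Pi$ such that $\mathrm{Lk}(\Sigma)\cap\mathrm{Lk}(\Delta)=\mathrm{Lk}(\Pi)\star\Psi$.
   Context: Graphs are simplicial; a simplex is a (possibly empty) clique. For a simplex $\Delta$, $\mathrm{Lk}(\Delta)$ is the subgraph spanned by vertices not in $\Delta$ adjacent to every vertex of $\Delta$ ($\mathrm{Lk}(\emptyset)=X$). $\star$ denotes join. Blowup: $X$ is obtained from $\overline X$ by replacing each vertex $v$ by $\mathrm{Squid}(v)$, the star with centre $v$ and leaf set $L_v^{(0)}$ (no edges among leaves). For $\overline X$-adjacent $v,w$, every vertex of $\mathrm{Squid}(v)$ is adjacent to every vertex of $\mathrm{Squid}(w)$; there are no other edges. *)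

(* Defs.v *)
From Stdlib Require Import List.
Set Implicit Arguments.

Section Graphs.
Variable T : Type.
Variable adj : T -> T -> Prop.

Definition simplicial_graph : Prop :=
  (forall x y, adj x y -> adj y x) /\ (forall x, ~ adj x x).

Definition triangle_free : Prop :=
  forall a b c, adj a b -> adj b c -> adj c a -> False.

Definition square_free : Prop :=
  forall a b c d, a <> c -> b <> d ->
    adj a b -> adj b c -> adj c d -> adj d a -> False.

Definition no_isolated_vertex : Prop := forall v, exists w, adj v w.

Definition simplex (S : T -> Prop) : Prop :=
  (forall x y, S x -> S y -> x <> y -> adj x y) /\
  (exists l : list T, forall x, S x <-> In x l).

Definition maximal_simplex (S : T -> Prop) : Prop :=
  simplex S /\
  forall S', simplex S' -> (forall x, S x -> S' x) -> forall x, S' x -> S x.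

(* vertex set of Lk(S) (an induced subgraph); Lk(empty) = everything *)
Definition link (S : T -> Prop) : T -> Prop :=
  fun x => ~ S x /\ forall y, S y -> adj x y.

(* A = B * C as induced subgraphs of the ambient graph:
   A is the disjoint union of B and C with all B--C edges present. *)
Definition is_join (A B C : T -> Prop) : Prop :=
  (forall x, A x <-> B x \/ C x) /\
  (forall x, ~ (B x /\ C x)) /\
  (forall x y, B x -> C y -> adj x y).
End Graphs.

(* Blowup of (V, E) w.r.t. leaf sets L v: vertex (v; None) is the centre v,
   (v; Some l) is the leaf l of Squid(v). *)
Definition blowup_vertex (V : Type) (L : V -> Type) : Type :=
  {v : V & option (L v)}.

Definition is_centre (V : Type) (L : V -> Type) (x : blowup_vertex L) : Prop :=
  projT2 x = None.

Definition blowup_adj (V : Type) (E : V -> V -> Prop) (L : V -> Type)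
  (x y : blowup_vertex L) : Prop :=
  E (projT1 x) (projT1 y) \/
  (projT1 x = projT1 y /\
   ((is_centre x /\ ~ is_centre y) \/ (~ is_centre x /\ is_centre y))).

(* Main.v *)
Require Import Defs.
From Stdlib Require Import List Classical ClassicalEpsilon.
Import ListNotations.

Section Blow.
Variable V : Type.
Variable E : V -> V -> Prop.
Variable L : V -> Type.
Hypothesis HE : simplicial_graph E.
Hypothesis Htri : triangle_free E.
Hypothesis Hsq : square_free E.
Hypothesis Hiso : no_isolated_vertex E.
Hypothesis HL : forall v, inhabited (L v).

Notation B := (blowup_vertex L).
Notation adjX := (blowup_adj E (L:=L)).

Definition cen (S : B -> Prop) z := exists y, S y /\ projT1 y = z /\ projT2 y = None.
Definition lf (S : B -> Prop) z := exists y, S y /\ projT1 y = z /\ projT2 y <> None.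
Definition Dd (S : B -> Prop) z := forall u, S u -> projT1 u <> z -> E (projT1 u) z.

Lemma Esym : forall a b, E a b -> E b a.
Proof. destruct HE as [H _]; exact H. Qed.
Lemma Eirr : forall a, ~ E a a.
Proof. destruct HE as [_ H]; exact H. Qed.

Lemma char (S : B -> Prop) x : link adjX S x <-> Dd S (projT1 x) /\
  (projT2 x = None -> ~ cen S (projT1 x)) /\ (projT2 x <> None -> ~ lf S (projT1 x)).
Proof.
  unfold link, blowup_adj, is_centre, Dd, cen, lf. split.
  - intros [Hn Ha]. split; [|split].
    + intros u Hu Hne. destruct (Ha u Hu) as [H|[H _]].
      * apply Esym; exact H.
      * exfalso; apply Hne; symmetry; exact H.
    + intros Hx [y [Hy [Hy1 Hy2]]]. destruct (Ha y Hy) as [H|[_ H]].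
      * rewrite Hy1 in H. apply (Eirr _ H).
      * tauto.
    + intros Hx [y [Hy [Hy1 Hy2]]]. destruct (Ha y Hy) as [H|[_ H]].
      * rewrite Hy1 in H. apply (Eirr _ H).
      * tauto.
  - intros [HD [Hc Hl]]. split.
    + intros Hs. destruct (classic (projT2 x = None)) as [h|h].
      * apply (Hc h). exists x; auto.
      * apply (Hl h); exists x; auto.
    + intros y Hy. destruct (classic (projT1 y = projT1 x)) as [h|h].
      * right. split; [symmetry; exact h|].
        destruct (classic (projT2 x = None)) as [hx|hx];
        destruct (classic (projT2 y = None)) as [hy|hy].
        -- exfalso; apply (Hc hx); exists y; auto.
        -- left; auto.
        -- right; auto.
        -- exfalso; apply (Hl hx); exists y; auto.
      * left. apply Esym. apply HD; auto.
Qed.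

Lemma link_ext (S T : B -> Prop) x :
  (forall f, Dd S f <-> Dd T f) -> (forall f, cen S f <-> cen T f) ->
  (forall f, lf S f <-> lf T f) -> (link adjX S x <-> link adjX T x).
Proof.
  intros H1 H2 H3. rewrite !char. rewrite H1.
  split; intros [a [b c]]; split; auto; split; intros h; [rewrite <- H2|rewrite <- H3|rewrite H2|rewrite H3]; auto.
Qed.

Definition Qc (S U : B -> Prop) (f : V) (l : L f) : Prop :=
  S (existT _ f (Some l)) \/ (~ (exists l', S (existT _ f (Some l'))) /\ U (existT _ f (Some l))).
Definition ch S U f : L f := epsilon (HL f) (Qc S U f).

Lemma ch_S S U : forall y, S y -> projT2 y <> None ->
  S (existT _ (projT1 y) (Some (ch S U (projT1 y)))).
Proof.
  intros [f o] Hy Hn; simpl in *. destruct o as [l|]; [|congruence].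
  assert (H: Qc S U f (ch S U f)). { unfold ch; apply epsilon_spec. exists l. left; auto. }
  destruct H as [H|[H _]]; auto. exfalso; apply H; exists l; auto.
Qed.

Lemma ch_U (S U : B -> Prop) : (forall y, S y -> U y) -> forall y, U y -> projT2 y <> None ->
  U (existT _ (projT1 y) (Some (ch S U (projT1 y)))).
Proof.
  intros HSU [f o] Hy Hn; simpl in *. destruct o as [l|]; [|congruence].
  assert (H: Qc S U f (ch S U f)).
  { unfold ch; apply epsilon_spec. destruct (classic (exists l', S (existT _ f (Some l')))) as [[l' h]|h].
    - exists l'; left; auto.
    - exists l; right; auto. }
  destruct H as [H|[_ H]]; auto.
Qed.

Lemma leaf_unique (S : B -> Prop) : simplex adjX S -> forall x y, S x -> S y ->
  projT1 x = projT1 y -> projT2 x <> None -> projT2 y <> None -> x = y.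
Proof.
  intros [Hcl _] x y Hx Hy H1 H2 H3. destruct (classic (x = y)) as [h|h]; auto.
  destruct (Hcl x y Hx Hy h) as [H|[_ H]].
  - rewrite H1 in H; destruct (Eirr _ H).
  - unfold is_centre in H; tauto.
Qed.

Lemma cen_unique : forall x y : B, projT1 x = projT1 y -> projT2 x = None -> projT2 y = None -> x = y.
Proof. intros [f o] [g o']; simpl; intros; subst; reflexivity. Qed.

Lemma same_snd (c : forall f, L f) : forall x y : B, projT1 x = projT1 y ->
  projT2 x = Some (c (projT1 x)) -> projT2 y = Some (c (projT1 y)) -> x = y.
Proof. intros [f o] [g o']; simpl; intros; subst; reflexivity. Qed.

Lemma fin_sub (S : B -> Prop) l : (forall x, S x -> In x l) -> exists l', forall x, S x <-> In x l'.
Proof.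
  intros H. exists (filter (fun x => if excluded_middle_informative (S x) then true else false) l).
  intro x; rewrite filter_In; destruct (excluded_middle_informative (S x)); split; intuition; discriminate.
Qed.

Definition Pi (c : forall f, L f) (z y : V) (b : Prop) (x : B) : Prop :=
  (projT1 x = z /\ (projT2 x = None \/ (b /\ projT2 x = Some (c (projT1 x))))) \/
  (projT1 x = y /\ (projT2 x = None \/ projT2 x = Some (c (projT1 x)))).

Lemma clique_same (c : forall f, L f) : forall x w : B, x <> w -> projT1 x = projT1 w ->
  (projT2 x = None \/ projT2 x = Some (c (projT1 x))) ->
  (projT2 w = None \/ projT2 w = Some (c (projT1 w))) -> adjX x w.
Proof.
  intros x w Hne H1 Hx Hw. unfold blowup_adj, is_centre. right. split; auto.
  destruct Hx as [Hx|Hx]; destruct Hw as [Hw|Hw].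
  - exfalso; apply Hne; apply cen_unique; auto.
  - left; split; auto; rewrite Hw; discriminate.
  - right; split; auto; rewrite Hx; discriminate.
  - exfalso; apply Hne; apply (same_snd c); auto.
Qed.

Lemma Pi_simplex c z y b : E z y -> simplex adjX (Pi c z y b).
Proof.
  intros Hzy. split.
  - intros x w Hx Hw Hne.
    destruct Hx as [[Hx1 Hx2]|[Hx1 Hx2]]; destruct Hw as [[Hw1 Hw2]|[Hw1 Hw2]].
    + apply (clique_same c); [auto|congruence|destruct Hx2 as [?|[_ ?]]; auto|destruct Hw2 as [?|[_ ?]]; auto].
    + left. rewrite Hx1, Hw1; exact Hzy.
    + left. rewrite Hx1, Hw1; apply Esym; exact Hzy.
    + apply (clique_same c); [auto|congruence|auto|auto].
  - apply (fin_sub _ [existT _ z None; existT _ z (Some (c z)); existT _ y None; existT _ y (Some (c y))]).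
    intros [f o] Hx; unfold Pi in Hx; simpl in Hx.
    destruct Hx as [[e H]|[e H]]; subst f; [destruct H as [H|[_ H]]|destruct H as [H|H]]; subst o; simpl; auto 6.
Qed.

Lemma Pi_link c z y b x : E z y ->
  (link adjX (Pi c z y b) x <-> projT1 x = z /\ projT2 x <> None /\ ~ b).
Proof.
  intros Hzy. rewrite char.
  assert (Hzny : z <> y). { intro h; subst; apply (Eirr _ Hzy). }
  assert (Pz : Pi c z y b (existT _ z None)). { left; simpl; auto. }
  assert (Py : Pi c z y b (existT _ y None)). { right; simpl; auto. }
  assert (Pyl : Pi c z y b (existT _ y (Some (c y)))). { right; simpl; auto. }
  split.
  - intros [HD [Hc Hl]].
    assert (Hf : projT1 x = z).
    { destruct (classic (projT1 x = z)) as [h|h]; auto.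
      destruct (classic (projT1 x = y)) as [h'|h'].
      - exfalso. destruct (classic (projT2 x = None)) as [hn|hn].
        + apply (Hc hn). exists (existT _ y None); simpl; auto.
        + apply (Hl hn). exists (existT _ y (Some (c y))); simpl; split; auto; split; auto; discriminate.
      - exfalso. assert (E1 := HD _ Pz (fun e => h (eq_sym e))).
        assert (E2 := HD _ Py (fun e => h' (eq_sym e))). simpl in E1, E2.
        apply (Htri z y (projT1 x) Hzy E2 (Esym _ _ E1)). }
    split; auto. split.
    + intro hn. apply (Hc hn). rewrite Hf. exists (existT _ z None); simpl; auto.
    + intros hb. assert (hn : projT2 x <> None).
      { intro hn. apply (Hc hn). rewrite Hf. exists (existT _ z None); simpl; auto. }
      apply (Hl hn). rewrite Hf. exists (existT _ z (Some (c z))). split.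
      * left; simpl; auto.
      * simpl; split; auto; discriminate.
  - intros [Hf [Hn Hb]]. split; [|split].
    + intros u Hu Hne. rewrite Hf in *. destruct Hu as [[Hu1 _]|[Hu1 _]]; [contradiction|].
      rewrite Hu1; apply Esym; exact Hzy.
    + intro h; contradiction.
    + intros _ [w [Hw [Hw1 Hw2]]]. rewrite Hf in Hw1. destruct Hw as [[_ [h|[h _]]]|[h _]]; auto.
      apply Hzny; congruence.
Qed.

Lemma Pi_contains (S U : B -> Prop) z y (b : Prop) : simplex adjX S -> (forall x, S x -> U x) -> E z y ->
  (forall x, S x -> projT1 x = z \/ projT1 x = y) -> (lf S z -> b) ->
  forall x, S x -> Pi (ch S U) z y b x.
Proof.
  intros HS HSU Hzy Hfib Hb x Hx.
  assert (Heq : projT2 x <> None -> projT2 x = Some (ch S U (projT1 x))).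
  { intro H. assert (Hy := ch_S S U x Hx H).
    assert (e := leaf_unique S HS x _ Hx Hy eq_refl H ltac:(simpl; discriminate)).
    rewrite e; reflexivity. }
  destruct (Hfib x Hx) as [h|h]; [left|right]; split; auto;
  destruct (classic (projT2 x = None)); auto; right; auto.
  split; auto. apply Hb; exists x; auto.
Qed.

Lemma fits (S : B -> Prop) z : simplex adjX S -> (forall x, S x -> projT1 x <> z -> E (projT1 x) z) ->
  exists y, E z y /\ forall x, S x -> projT1 x = z \/ projT1 x = y.
Proof.
  intros HS H. destruct (classic (exists x, S x /\ projT1 x <> z)) as [[x0 [H0 H0']]|Hn].
  - exists (projT1 x0). split; [apply Esym; auto|].
    intros x Hx. destruct (classic (projT1 x = z)) as [h|h]; auto.
    destruct (classic (projT1 x = projT1 x0)) as [h'|h']; auto.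
    exfalso. assert (Hne : x <> x0) by (intro e; subst; auto).
    destruct HS as [Hcl _]. destruct (Hcl x x0 Hx H0 Hne) as [A|[A _]]; [|contradiction].
    apply (Htri _ _ _ A (H x0 H0 H0') (Esym _ _ (H x Hx h))).
  - destruct (Hiso z) as [y Hy]. exists y. split; auto. intros x Hx.
    left. apply NNPP; intro h; apply Hn; exists x; auto.
Qed.

Lemma star (S : B -> Prop) (z0 : V) : simplex adjX S ->
  exists z, forall x, S x -> projT1 x <> z -> E (projT1 x) z.
Proof.
  intros HS. destruct (classic (exists x, S x)) as [[x0 H0]|Hn].
  - exists (projT1 x0). intros x Hx h.
    assert (Hne : x <> x0) by (intro e; subst; auto).
    destruct HS as [Hcl _]. destruct (Hcl x x0 Hx H0 Hne) as [A|[A _]]; [auto|contradiction].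
  - exists z0. intros x Hx; exfalso; apply Hn; eauto.
Qed.

Lemma uniqD (U : B -> Prop) u u' : U u -> U u' -> projT1 u <> projT1 u' -> ~ E (projT1 u) (projT1 u') ->
  forall z z', Dd U z -> Dd U z' -> z = z'.
Proof.
  intros Hu Hu' Hne HnE.
  assert (K : forall z, Dd U z -> E (projT1 u) z /\ E (projT1 u') z).
  { intros z Hz. destruct (classic (projT1 u = z)) as [h|h].
    - exfalso. subst z. apply HnE. apply Esym. apply Hz; auto.
    - destruct (classic (projT1 u' = z)) as [h'|h'].
      + exfalso. subst z. apply HnE. apply Hz; auto.
      + split; apply Hz; auto. }
  intros z z' Hz Hz'. destruct (K z Hz) as [A1 A2]. destruct (K z' Hz') as [B1 B2].
  apply NNPP; intro h.
  apply (Hsq (projT1 u) z (projT1 u') z' Hne h A1 (Esym _ _ A2) B2 (Esym _ _ B1)).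
Qed.

Lemma core (Sigma Delta : B -> Prop) : simplex adjX Sigma -> simplex adjX Delta ->
  exists Pi0 Psi, simplex adjX Pi0 /\ simplex adjX Psi /\ (forall x, Sigma x -> Pi0 x) /\
  is_join adjX (link adjX (fun x => Sigma x \/ Delta x)) (link adjX Pi0) Psi.
Proof.
  intros HS HD.
  set (U := fun x => Sigma x \/ Delta x).
  assert (HSU : forall x, Sigma x -> U x) by (intros; left; auto).
  assert (HUfin : exists l, forall x, U x -> In x l).
  { destruct HS as [_ [l1 H1]]. destruct HD as [_ [l2 H2]]. exists (l1 ++ l2).
    intros x [h|h]; apply in_or_app; [left; apply H1|right; apply H2]; auto. }
  destruct (classic (exists u u', U u /\ U u' /\ projT1 u <> projT1 u' /\ ~ E (projT1 u) (projT1 u')))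
    as [[u [u' [Hu [Hu' [Hne HnE]]]]]|Hn].
  - destruct (classic (exists z, Dd U z)) as [[z Hz]|Hnz].
    + destruct (fits Sigma z HS (fun x hx => Hz x (HSU x hx))) as [y [Hzy Hfib]].
      exists (Pi (ch Sigma U) z y (lf U z)).
      exists (fun x => projT1 x = z /\ projT2 x = None /\ ~ cen U z).
      split; [apply Pi_simplex; auto|].
      split.
      { split.
        - intros x w [h1 [h2 _]] [h3 [h4 _]] hne. exfalso; apply hne; apply cen_unique; congruence.
        - apply (fin_sub _ [existT _ z None]). intros x [h1 [h2 _]]. left.
          symmetry; apply cen_unique; simpl; auto. }
      split.
      { apply Pi_contains; auto. intros [w [h1 h2]]; exists w; split; auto. }
      split; [|split].
      * intro x. rewrite Pi_link by auto. rewrite char. split.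
        -- intros [HDx [Hc Hl]].
           assert (Hf : projT1 x = z) by (apply (uniqD U u u' Hu Hu' Hne HnE); auto).
           destruct (classic (projT2 x = None)) as [hn|hn].
           ++ right. split; auto. split; auto. rewrite <- Hf. apply Hc; auto.
           ++ left. split; auto. split; auto. rewrite <- Hf. apply Hl; auto.
        -- intros [[h1 [h2 h3]]|[h1 [h2 h3]]]; split; [rewrite h1; auto| |rewrite h1; auto|];
             split; intro h; try contradiction; rewrite h1; auto.
      * intros x [Ha Hb]. rewrite Pi_link in Ha by auto. destruct Ha as [_ [Ha _]].
        destruct Hb as [_ [Hb _]]. contradiction.
      * intros a w Ha Hw. rewrite Pi_link in Ha by auto. destruct Ha as [Ha1 [Ha2 _]].
        destruct Hw as [Hw1 [Hw2 _]]. unfold blowup_adj, is_centre. right. split; [congruence|].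
        right; auto.
    + destruct (star Sigma (projT1 u) HS) as [z Hz].
      destruct (fits Sigma z HS Hz) as [y [Hzy Hfib]].
      exists (Pi (ch Sigma U) z y True). exists (fun _ => False).
      split; [apply Pi_simplex; auto|].
      split; [split; [intros; contradiction| exists nil; intros; simpl; tauto]|].
      split; [apply Pi_contains; auto|].
      split; [|split].
      * intro x. rewrite Pi_link by auto. rewrite char. split.
        -- intros [HDx _]. exfalso; apply Hnz; eauto.
        -- intros [[_ [_ h]]|h]; [exfalso; auto|contradiction].
      * intros x [_ h]; auto.
      * intros; contradiction.
  - assert (HA : forall u u', U u -> U u' -> projT1 u <> projT1 u' -> E (projT1 u) (projT1 u')).
    { intros u u' h1 h2 h3. apply NNPP; intro h4; apply Hn; exists u, u'; auto. }
    set (c := ch Sigma U).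
    exists (fun x => U x /\ (projT2 x = None \/ projT2 x = Some (c (projT1 x)))).
    exists (fun _ => False).
    split.
    { split.
      - intros x w [Hx Hx'] [Hw Hw'] hne.
        destruct (classic (projT1 x = projT1 w)) as [h|h].
        + apply (clique_same c); auto.
        + left; apply HA; auto.
      - destruct HUfin as [l Hl]. apply (fin_sub _ l). intros x [h _]; auto. }
    split; [split; [intros; contradiction| exists nil; intros; simpl; tauto]|].
    split.
    { intros x Hx. split; [left; auto|].
      destruct (classic (projT2 x = None)) as [h|h]; [left; auto|right].
      assert (Hy := ch_S Sigma U x Hx h).
      assert (e := leaf_unique Sigma HS x _ Hx Hy eq_refl h ltac:(simpl; discriminate)).
      rewrite e; reflexivity. }
    split; [|split].
    + intro x. assert (K : link adjX U x <-> link adjX (fun x => U x /\ (projT2 x = None \/ projT2 x = Some (c (projT1 x)))) x).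
      { apply link_ext.
        - intro f. split.
          + intros HDf w [Hw _] hne; apply HDf; auto.
          + intros HDf w Hw hne. destruct (classic (projT2 w = None)) as [h|h].
            * apply HDf; auto.
            * apply (HDf (existT _ (projT1 w) (Some (c (projT1 w))))); simpl; auto.
              split; [apply ch_U; auto|right; reflexivity].
        - intro f. split.
          + intros [w [Hw [h1 h2]]]. exists w; auto.
          + intros [w [[Hw _] [h1 h2]]]. exists w; auto.
        - intro f. split.
          + intros [w [Hw [h1 h2]]]. exists (existT _ (projT1 w) (Some (c (projT1 w)))).
            split; [split; [apply ch_U; auto|right; reflexivity]|].
            simpl; split; auto; discriminate.
          + intros [w [[Hw _] [h1 h2]]]. exists w; auto. }
      rewrite K. tauto.
    + intros x [_ h]; auto.
    + intros; contradiction.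
Qed.

End Blow.

Theorem mainTheorem20 (V : Type) (E : V -> V -> Prop) (L : V -> Type)
  (HE : simplicial_graph E) (Htri : triangle_free E) (Hsq : square_free E)
  (Hiso : no_isolated_vertex E) (HL : forall v, inhabited (L v))
  (Sigma Delta : blowup_vertex L -> Prop)
  (HSigma : simplex (blowup_adj E (L:=L)) Sigma)
  (HSigma_nm : ~ maximal_simplex (blowup_adj E (L:=L)) Sigma)
  (HDelta : simplex (blowup_adj E (L:=L)) Delta)
  (HDelta_nm : ~ maximal_simplex (blowup_adj E (L:=L)) Delta) :
  exists Pi Psi : blowup_vertex L -> Prop,
    simplex (blowup_adj E (L:=L)) Pi /\
    simplex (blowup_adj E (L:=L)) Psi /\
    (forall x, Sigma x -> Pi x) /\
    is_join (blowup_adj E (L:=L))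
      (fun x => link (blowup_adj E (L:=L)) Sigma x /\ link (blowup_adj E (L:=L)) Delta x)
      (link (blowup_adj E (L:=L)) Pi) Psi.
Proof.
  destruct (core V E L HE Htri Hsq Hiso HL Sigma Delta HSigma HDelta)
    as [P [Q [H1 [H2 [H3 [J1 [J2 J3]]]]]]].
  exists P, Q. split; auto. split; auto. split; auto. split; auto.
  intro x. rewrite <- J1. unfold link. split.
  - intros [[a b] [c d]]. split; [tauto|]. intros y [h|h]; auto.
  - intros [a b]. split; split; auto; tauto.
Qed.
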